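(* Let $\pi,\hat\pi\in\mathcal S_n$, $\eta,\hat\eta\in\mathcal S_d$, $M\in\mathbb{C}_{\mathrm{Biso}}(\pi,\eta)$, and $p,h\in\mathbb{R}$ with $h\ge 0$. Then \[ \mathcal L_{p,2h}(\hat\pi,\hat\eta)\leq 2\big(\mathcal R_{p-h,h}(\hat\pi)+\mathcal C_{p+h,h}(\hat\eta)\big)\wedge 2\big(\mathcal C_{p-h,h}(\hat\eta)+\mathcal R_{p+h,h}(\hat\pi)\big), \] and \[ \mathcal L_{p,h}(\hat\pi,\hat\eta)\geq \mathcal R_{p,h}(\hat\pi)\vee\mathcal C_{p,h}(\hat\eta). \]
   Context: A matrix is bi-isotonic if it is non-increasing along each row and each column. $\mathbb{C}_{\mathrm{Biso}}(\pi,\eta)$ is the set of $M\in[0,1]^{n\times d}$ such that $(M_{\pi^{-1}(i)\eta^{-1}(j)})_{ij}$ is bi-isotonic. $\mathcal{L}_{p,h}(\hat\pi,\hat\eta)=|\{(i,j): M_{\pi^{-1}(i)\eta^{-1}(j)}\leq p-h,\ M_{\hat\pi^{-1}(i)\hat\eta^{-1}(j)}\geq p+h\}|+|\{(i,j): M_{\pi^{-1}(i)\eta^{-1}(j)}\geq p+h,\ M_{\hat\pi^{-1}(i)\hat\eta^{-1}(j)}\leq p-h\}|$ (with $(i,j)$ ranging over $[n]\times[d]$). $\mathcal R_{p,h}(\hat\pi)=|\{(i,j): M_{\pi^{-1}(i)j}\leq p-h,\ M_{\hat\pi^{-1}(i)j}\geq p+h\}|+|\{(i,j): M_{\pi^{-1}(i)j}\geq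 p+h,\ M_{\hat\pi^{-1}(i)j}\leq p-h\}|$. $\mathcal C_{p,h}(\hat\eta)=|\{(i,j): M_{i\eta^{-1}(j)}\leq p-h,\ M_{i\hat\eta^{-1}(j)}\geq p+h\}|+|\{(i,j): M_{i\eta^{-1}(j)}\geq p+h,\ M_{i\hat\eta^{-1}(j)}\leq p-h\}|$. *)

(* Defs.v *)
From HB Require Import structures.
From mathcomp Require Import all_boot all_order all_algebra all_fingroup.
Set Implicit Arguments. Unset Strict Implicit. Unset Printing Implicit Defensive.
Import Order.TTheory GRing.Theory Num.Theory.
Local Open Scope ring_scope.

Definition bi_isotonic (R : realFieldType) (n d : nat) (N : 'M[R]_(n, d)) : Prop :=
  (forall (i i' : 'I_n) (j : 'I_d), (i <= i')%N -> N i' j <= N i j) /\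
  (forall (i : 'I_n) (j j' : 'I_d), (j <= j')%N -> N i j' <= N i j).

Definition CBiso (R : realFieldType) (n d : nat) (pi : 'S_n) (eta : 'S_d)
    (M : 'M[R]_(n, d)) : Prop :=
  (forall i j, 0 <= M i j <= 1) /\
  bi_isotonic (\matrix_(i, j) M ((pi^-1)%g i) ((eta^-1)%g j)).

Definition Lloss (R : realFieldType) (n d : nat) (M : 'M[R]_(n, d))
    (pi pih : 'S_n) (eta etah : 'S_d) (p h : R) : nat :=
  #|[set ij : 'I_n * 'I_d |
       (M ((pi^-1)%g ij.1) ((eta^-1)%g ij.2) <= p - h) &&
       (p + h <= M ((pih^-1)%g ij.1) ((etah^-1)%g ij.2))]| +
  #|[set ij : 'I_n * 'I_d |
       (p + h <= M ((pi^-1)%g ij.1) ((eta^-1)%g ij.2)) &&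
       (M ((pih^-1)%g ij.1) ((etah^-1)%g ij.2) <= p - h)]|.

Definition Rloss (R : realFieldType) (n d : nat) (M : 'M[R]_(n, d))
    (pi pih : 'S_n) (p h : R) : nat :=
  #|[set ij : 'I_n * 'I_d |
       (M ((pi^-1)%g ij.1) ij.2 <= p - h) &&
       (p + h <= M ((pih^-1)%g ij.1) ij.2)]| +
  #|[set ij : 'I_n * 'I_d |
       (p + h <= M ((pi^-1)%g ij.1) ij.2) &&
       (M ((pih^-1)%g ij.1) ij.2 <= p - h)]|.

Definition Closs (R : realFieldType) (n d : nat) (M : 'M[R]_(n, d))
    (eta etah : 'S_d) (p h : R) : nat :=
  #|[set ij : 'I_n * 'I_d |
       (M ij.1 ((eta^-1)%g ij.2) <= p - h) &&
       (p + h <= M ij.1 ((etah^-1)%g ij.2))]| +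
  #|[set ij : 'I_n * 'I_d |
       (p + h <= M ij.1 ((eta^-1)%g ij.2)) &&
       (M ij.1 ((etah^-1)%g ij.2) <= p - h)]|.

(* Main.v *)
Require Import Defs.
From HB Require Import structures.
From mathcomp Require Import all_boot all_order all_algebra all_fingroup.
From mathcomp Require Import lra zify.
Import Order.TTheory GRing.Theory Num.Theory.
Local Open Scope ring_scope.

Lemma pair_inj (T1 T2 : finType) (s : T1 -> T1) (t : T2 -> T2) :
  injective s -> injective t -> injective (fun x : T1 * T2 => (s x.1, t x.2)).
Proof. by move=> hs ht [a b] [c e] /= [/hs -> /ht ->]. Qed.

Lemma card_pair_sum (T1 T2 : finType) (P : T1 -> T2 -> bool) :
  #|[set x : T1 * T2 | P x.1 x.2]| = (\sum_(i : T1) #|[set k | P i k]|)%N.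
Proof.
transitivity (\sum_(x : T1 * T2) (P x.1 x.2 : nat))%N.
  rewrite -sum1_card big_mkcond /=; apply eq_bigr => x _; rewrite inE; by case: P.
rewrite -(pair_big xpredT xpredT (fun i k => (P i k : nat))) /=.
apply eq_bigr => i _; rewrite -sum1_card [in RHS]big_mkcond; apply eq_bigr => k _.
by rewrite inE; case: P.
Qed.

Lemma card_pair_sum2 (T1 T2 : finType) (P : T1 -> T2 -> bool) :
  #|[set x : T1 * T2 | P x.1 x.2]| = (\sum_(j : T2) #|[set k | P k j]|)%N.
Proof.
transitivity (\sum_(x : T1 * T2) (P x.1 x.2 : nat))%N.
  rewrite -sum1_card big_mkcond /=; apply eq_bigr => x _; rewrite inE; by case: P.
rewrite -(pair_big xpredT xpredT (fun i k => (P i k : nat))) /= exchange_big.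
apply eq_bigr => i _; rewrite -sum1_card [in RHS]big_mkcond; apply eq_bigr => k _.
by rewrite inE; case: P.
Qed.

Lemma rowkey (T : finType) (X Y : {set T}) (s : T -> T) : injective s ->
  (forall k1 k2, k1 \in X -> k1 \in Y -> k2 \notin X -> k2 \notin Y -> False) ->
  (#|X :&: Y| <= #|X :&: s @^-1: Y|)%N.
Proof.
move=> sinj H.
have [/eqP->|/set0Pn [k1]] := boolP (X :&: Y == set0); first by rewrite cards0.
rewrite inE => /andP [k1X k1Y].
have U : X :|: Y = setT.
  apply/setP => k; rewrite !inE; apply/negPn/negP.
  by rewrite negb_or => /andP [a b]; apply: (H k1 k).
have := cardsUI X Y; rewrite U cardsT => e1.
have := cardsUI X (s @^-1: Y); rewrite card_preimset // => e2.
have : (#|X :|: s @^-1: Y| <= #|T|)%N by apply: max_card.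
lia.
Qed.

Lemma card_sub2 (T : finType) (A B C : {set T}) (f g : T -> T) :
  injective f -> injective g -> A \subset f @^-1: B :|: g @^-1: C ->
  (#|A| <= #|B| + #|C|)%N.
Proof.
move=> fi gi sub; rewrite -(card_preimset B fi) -(card_preimset C gi).
apply: leq_trans (subset_leq_card sub) _; exact: leq_card_setU.
Qed.

Lemma rowkey' (T : finType) (A B : pred T) (s : T -> T) : injective s ->
  (forall k1 k2, A k1 -> B k1 -> ~~ A k2 -> ~~ B k2 -> False) ->
  (#|[set k | A k && B k]| <= #|[set k | A k && B (s k)]|)%N.
Proof.
move=> si H.
have := @rowkey T [set k | A k] [set k | B k] s si.
have -> : [set k | A k] :&: [set k | B k] = [set k | A k && B k].
  by apply/setP => k; rewrite !inE.
have -> : [set k | A k] :&: s @^-1: [set k | B k] = [set k | A k && B (s k)].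
  by apply/setP => k; rewrite !inE.
apply=> k1 k2; rewrite !inE; exact: H.
Qed.

Ltac pick := apply/orP; first [by left; apply/andP; split; lra | by right; apply/andP; split; lra].

Theorem lemmaA1 (R : realFieldType) (n d : nat) (pi pih : 'S_n) (eta etah : 'S_d)
    (M : 'M[R]_(n, d)) (p h : R) :
  CBiso pi eta M -> 0 <= h ->
  (Lloss M pi pih eta etah p (2 * h) <=
     minn (2 * (Rloss M pi pih (p - h) h + Closs M eta etah (p + h) h))
          (2 * (Closs M eta etah (p - h) h + Rloss M pi pih (p + h) h)))%N /\
  (maxn (Rloss M pi pih p h) (Closs M eta etah p h) <=
     Lloss M pi pih eta etah p h)%N.


Proof.
move=> [rng [hc hr]] h0.
have rowmono : forall x (j j' : 'I_d), (j <= j')%N ->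
    M x ((eta^-1)%g j') <= M x ((eta^-1)%g j).
  move=> x j j' hj; have := hr (pi x) j j' hj; by rewrite !mxE permK.
have colmono : forall y (i i' : 'I_n), (i <= i')%N ->
    M ((pi^-1)%g i') y <= M ((pi^-1)%g i) y.
  move=> y i i' hi; have := hc i i' (eta y) hi; by rewrite !mxE permK.
split.
  have B1 : (Lloss M pi pih eta etah p (2 * h) <=
            Rloss M pi pih (p - h) h + Closs M eta etah (p + h) h)%N.
    rewrite /Lloss /Rloss /Closs addnACA; apply: leq_add.
      apply: (@card_sub2 _ _ _ _ (fun x : 'I_n * 'I_d => (x.1, (eta^-1)%g x.2))
        (fun x : 'I_n * 'I_d => ((pih^-1)%g x.1, x.2))).
      - by move=> [a b] [c e] /= [H1 H2]; congr (_, _); first [exact H1 | exact: (perm_inj H1) | exact H2 | exact: (perm_inj H2)].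
      - by move=> [a b] [c e] /= [H1 H2]; congr (_, _); first [exact H1 | exact: (perm_inj H1) | exact H2 | exact: (perm_inj H2)].
      apply/subsetP => -[i j]; rewrite !inE /= => /andP [h1 h2].
      case: (lerP p (M ((pih^-1)%g i) ((eta^-1)%g j))) => h3; pick.
    apply: (@card_sub2 _ _ _ _ (fun x : 'I_n * 'I_d => (x.1, (etah^-1)%g x.2))
        (fun x : 'I_n * 'I_d => ((pi^-1)%g x.1, x.2))).
    - by move=> [a b] [c e] /= [H1 H2]; congr (_, _); first [exact H1 | exact: (perm_inj H1) | exact H2 | exact: (perm_inj H2)].
    - by move=> [a b] [c e] /= [H1 H2]; congr (_, _); first [exact H1 | exact: (perm_inj H1) | exact H2 | exact: (perm_inj H2)].
    apply/subsetP => -[i j]; rewrite !inE /= => /andP [h1 h2].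
    case: (lerP (M ((pi^-1)%g i) ((etah^-1)%g j)) p) => h3; pick.
  have B2 : (Lloss M pi pih eta etah p (2 * h) <=
            Closs M eta etah (p - h) h + Rloss M pi pih (p + h) h)%N.
    rewrite /Lloss /Rloss /Closs addnACA; apply: leq_add.
      apply: (@card_sub2 _ _ _ _ (fun x : 'I_n * 'I_d => ((pi^-1)%g x.1, x.2))
        (fun x : 'I_n * 'I_d => (x.1, (etah^-1)%g x.2))).
      - by move=> [a b] [c e] /= [H1 H2]; congr (_, _); first [exact H1 | exact: (perm_inj H1) | exact H2 | exact: (perm_inj H2)].
      - by move=> [a b] [c e] /= [H1 H2]; congr (_, _); first [exact H1 | exact: (perm_inj H1) | exact H2 | exact: (perm_inj H2)].
      apply/subsetP => -[i j]; rewrite !inE /= => /andP [h1 h2].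
      case: (lerP p (M ((pi^-1)%g i) ((etah^-1)%g j))) => h3; pick.
    apply: (@card_sub2 _ _ _ _ (fun x : 'I_n * 'I_d => ((pih^-1)%g x.1, x.2))
        (fun x : 'I_n * 'I_d => (x.1, (eta^-1)%g x.2))).
    - by move=> [a b] [c e] /= [H1 H2]; congr (_, _); first [exact H1 | exact: (perm_inj H1) | exact H2 | exact: (perm_inj H2)].
    - by move=> [a b] [c e] /= [H1 H2]; congr (_, _); first [exact H1 | exact: (perm_inj H1) | exact H2 | exact: (perm_inj H2)].
    apply/subsetP => -[i j]; rewrite !inE /= => /andP [h1 h2].
    case: (lerP (M ((pih^-1)%g i) ((eta^-1)%g j)) p) => h3; pick.
  lia.
rewrite geq_max; apply/andP; split.
  rewrite /Rloss /Lloss; apply: leq_add.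
    have -> : #|[set ij : 'I_n * 'I_d |
       (M ((pi^-1)%g ij.1) ((eta^-1)%g ij.2) <= p - h) &&
       (p + h <= M ((pih^-1)%g ij.1) ((etah^-1)%g ij.2))]| =
      #|[set x : 'I_n * 'I_d | (fun i k => (M ((pi^-1)%g i) k <= p - h) &&
          (p + h <= M ((pih^-1)%g i) ((etah^-1)%g (eta k)))) x.1 x.2]|.
      rewrite -(@card_preimset _ (fun x : 'I_n * 'I_d => (x.1, eta x.2))); last first.
        by move=> [a b] [c e] /= [H1 H2]; congr (_, _); first [exact H1 | exact: (perm_inj H1) | exact H2 | exact: (perm_inj H2)].
      by apply: eq_card => -[i k]; rewrite !inE /= permK.
    rewrite (@card_pair_sum _ _ (fun i k => (M ((pi^-1)%g i) k <= p - h) &&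
          (p + h <= M ((pih^-1)%g i) ((etah^-1)%g (eta k))))).
    rewrite (@card_pair_sum _ _ (fun i k => (M ((pi^-1)%g i) k <= p - h) &&
          (p + h <= M ((pih^-1)%g i) k))).
    apply: leq_sum => i _.
    apply: (@rowkey' _ (fun k => M ((pi^-1)%g i) k <= p - h)
       (fun k => p + h <= M ((pih^-1)%g i) k) (fun k => (etah^-1)%g (eta k))).
      by move=> x y /perm_inj /perm_inj.
    move=> k1 k2 /= h1 h2; rewrite -!ltNge => h3 h4.
    have [hj|hj] := leqP (eta k1) (eta k2).
      have := rowmono ((pi^-1)%g i) _ _ hj; have := rowmono ((pih^-1)%g i) _ _ hj.
      rewrite !permK; lra.
    have hj' := ltnW hj.
    have := rowmono ((pi^-1)%g i) _ _ hj'; have := rowmono ((pih^-1)%g i) _ _ hj'.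
    rewrite !permK; lra.
    have -> : #|[set ij : 'I_n * 'I_d |
       (p + h <= M ((pi^-1)%g ij.1) ((eta^-1)%g ij.2)) &&
       (M ((pih^-1)%g ij.1) ((etah^-1)%g ij.2) <= p - h)]| =
      #|[set x : 'I_n * 'I_d | (fun i k => (p + h <= M ((pi^-1)%g i) k) &&
          (M ((pih^-1)%g i) ((etah^-1)%g (eta k)) <= p - h)) x.1 x.2]|.
      rewrite -(@card_preimset _ (fun x : 'I_n * 'I_d => (x.1, eta x.2))); last first.
        by move=> [a b] [c e] /= [H1 H2]; congr (_, _); first [exact H1 | exact: (perm_inj H1) | exact H2 | exact: (perm_inj H2)].
      by apply: eq_card => -[i k]; rewrite !inE /= permK.
    rewrite (@card_pair_sum _ _ (fun i k => (p + h <= M ((pi^-1)%g i) k) &&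
          (M ((pih^-1)%g i) ((etah^-1)%g (eta k)) <= p - h))).
    rewrite (@card_pair_sum _ _ (fun i k => (p + h <= M ((pi^-1)%g i) k) &&
          (M ((pih^-1)%g i) k <= p - h))).
    apply: leq_sum => i _.
    apply: (@rowkey' _ (fun k => p + h <= M ((pi^-1)%g i) k)
       (fun k => M ((pih^-1)%g i) k <= p - h) (fun k => (etah^-1)%g (eta k))).
      by move=> x y /perm_inj /perm_inj.
    move=> k1 k2 /= h1 h2; rewrite -!ltNge => h3 h4.
    have [hj|hj] := leqP (eta k1) (eta k2).
      have := rowmono ((pi^-1)%g i) _ _ hj; have := rowmono ((pih^-1)%g i) _ _ hj.
      rewrite !permK; lra.
    have hj' := ltnW hj.
    have := rowmono ((pi^-1)%g i) _ _ hj'; have := rowmono ((pih^-1)%g i) _ _ hj'.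
    rewrite !permK; lra.
  rewrite /Closs /Lloss; apply: leq_add.
    have -> : #|[set ij : 'I_n * 'I_d |
       (M ((pi^-1)%g ij.1) ((eta^-1)%g ij.2) <= p - h) &&
       (p + h <= M ((pih^-1)%g ij.1) ((etah^-1)%g ij.2))]| =
      #|[set x : 'I_n * 'I_d | (fun i j => (M i ((eta^-1)%g j) <= p - h) &&
          (p + h <= M ((pih^-1)%g (pi i)) ((etah^-1)%g j))) x.1 x.2]|.
      rewrite -(@card_preimset _ (fun x : 'I_n * 'I_d => (pi x.1, x.2))); last first.
        by move=> [a b] [c e] /= [H1 H2]; congr (_, _); first [exact H1 | exact: (perm_inj H1) | exact H2 | exact: (perm_inj H2)].
      by apply: eq_card => -[i k]; rewrite !inE /= permK.
    rewrite (@card_pair_sum2 _ _ (fun i j => (M i ((eta^-1)%g j) <= p - h) &&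
          (p + h <= M ((pih^-1)%g (pi i)) ((etah^-1)%g j)))).
    rewrite (@card_pair_sum2 _ _ (fun i j => (M i ((eta^-1)%g j) <= p - h) &&
          (p + h <= M i ((etah^-1)%g j)))).
    apply: leq_sum => j _.
    apply: (@rowkey' _ (fun k => M k ((eta^-1)%g j) <= p - h)
       (fun k => p + h <= M k ((etah^-1)%g j)) (fun k => (pih^-1)%g (pi k))).
      by move=> x y /perm_inj /perm_inj.
    move=> k1 k2 /= h1 h2; rewrite -!ltNge => h3 h4.
    have [hj|hj] := leqP (pi k1) (pi k2).
      have := colmono ((eta^-1)%g j) _ _ hj; have := colmono ((etah^-1)%g j) _ _ hj.
      rewrite !permK; lra.
    have hj' := ltnW hj.
    have := colmono ((eta^-1)%g j) _ _ hj'; have := colmono ((etah^-1)%g j) _ _ hj'.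
    rewrite !permK; lra.
    have -> : #|[set ij : 'I_n * 'I_d |
       (p + h <= M ((pi^-1)%g ij.1) ((eta^-1)%g ij.2)) &&
       (M ((pih^-1)%g ij.1) ((etah^-1)%g ij.2) <= p - h)]| =
      #|[set x : 'I_n * 'I_d | (fun i j => (p + h <= M i ((eta^-1)%g j)) &&
          (M ((pih^-1)%g (pi i)) ((etah^-1)%g j) <= p - h)) x.1 x.2]|.
      rewrite -(@card_preimset _ (fun x : 'I_n * 'I_d => (pi x.1, x.2))); last first.
        by move=> [a b] [c e] /= [H1 H2]; congr (_, _); first [exact H1 | exact: (perm_inj H1) | exact H2 | exact: (perm_inj H2)].
      by apply: eq_card => -[i k]; rewrite !inE /= permK.
    rewrite (@card_pair_sum2 _ _ (fun i j => (p + h <= M i ((eta^-1)%g j)) &&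
          (M ((pih^-1)%g (pi i)) ((etah^-1)%g j) <= p - h))).
    rewrite (@card_pair_sum2 _ _ (fun i j => (p + h <= M i ((eta^-1)%g j)) &&
          (M i ((etah^-1)%g j) <= p - h))).
    apply: leq_sum => j _.
    apply: (@rowkey' _ (fun k => p + h <= M k ((eta^-1)%g j))
       (fun k => M k ((etah^-1)%g j) <= p - h) (fun k => (pih^-1)%g (pi k))).
      by move=> x y /perm_inj /perm_inj.
    move=> k1 k2 /= h1 h2; rewrite -!ltNge => h3 h4.
    have [hj|hj] := leqP (pi k1) (pi k2).
      have := colmono ((eta^-1)%g j) _ _ hj; have := colmono ((etah^-1)%g j) _ _ hj.
      rewrite !permK; lra.
    have hj' := ltnW hj.
    have := colmono ((eta^-1)%g j) _ _ hj'; have := colmono ((etah^-1)%g j) _ _ hj'.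
    rewrite !permK; lra.
Qed.
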